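(* Let $p$ be a prime, $l\ge 1$ an integer and $q=p^l$. Let $P(q)$ be the $q\times q$ matrix with entries $\binom{i+j}{i}$, $0\le i,j<q$. Then the reduction of $P(q)$ modulo $p$ has multiplicative order $3$ in $\mathrm{GL}(q,\mathbf{F}_p)$, and its characteristic polynomial $\chi_q(t)=\det(tI(q)-P(q))$ satisfies $$\chi_q(t)\equiv (t^2+t+1)^{\frac{q-\epsilon(q)}{3}}(t-1)^{\frac{q+2\epsilon(q)}{3}}\pmod p,$$ where $\epsilon(q)\in\{-1,0,1\}$ is defined by $\epsilon(q)\equiv q\pmod 3$.
   Context: $I(q)$ denotes the $q\times q$ identity matrix. *)

(* Defs.v *)
From HB Require Import structures.
From mathcomp Require Import all_boot all_order all_algebra.
Set Implicit Arguments. Unset Strict Implicit. Unset Printing Implicit Defensive.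
Import Order.TTheory GRing.Theory Num.Theory.
Local Open Scope ring_scope.

Definition pascal_mx (R : nzRingType) (q : nat) : 'M[R]_q :=
  \matrix_(i < q, j < q) ('C(i + j, i))%:R.

Definition epsilon3 (q : nat) : int :=
  if (q %% 3 == 2)%N then -1 else (q %% 3)%:Z.

Definition expo_quad (q : nat) : nat := `|((q%:Z - epsilon3 q) %/ 3)%Z|%N.
Definition expo_lin (q : nat) : nat := `|((q%:Z + 2 * epsilon3 q) %/ 3)%Z|%N.

(* Main.v *)
Require Import Defs.
From HB Require Import structures.
From mathcomp Require Import all_boot all_order all_algebra.
From mathcomp Require Import ring zify closed_field.
Import Order.TTheory GRing.Theory Num.Theory.
Local Open Scope ring_scope.

Set Implicit Arguments. Unset Strict Implicit. Unset Printing Implicit Defensive.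


Lemma coef_linpow (R : comNzRingType) (a b : R) m k :
  (('X * a%:P + b%:P) ^+ m)`_k = a ^+ k * b ^+ (m - k) *+ 'C(m, k).
Proof.
rewrite addrC exprDn coef_sum.
have E i : (b%:P ^+ (m - i) * ('X * a%:P) ^+ i) = (b ^+ (m - i) * a ^+ i)%:P * 'X^i.
  by rewrite exprMn polyCM !polyC_exp; ring.
case: (leqP k m) => hk.
  rewrite (bigD1 (Ordinal (n:=m.+1) (m:=k) hk)) //= big1 ?addr0.
    by rewrite E coefMn coefCM coefXn eqxx mulr1 mulrC.
  move=> i /eqP hi; rewrite E coefMn coefCM coefXn.
  case: eqP => [hik|]; last by rewrite mulr0 mul0rn.
  by case: hi; apply: val_inj.
rewrite bin_small // mulr0n big1 // => i _.
rewrite E coefMn coefCM coefXn.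
case: eqP => [hik|]; last by rewrite mulr0 mul0rn.
by move: (ltn_ord i); rewrite -hik ltnS leqNgt hk.
Qed.

Lemma coef_XaddC_pow (R : comNzRingType) (c : R) m k :
  (('X + c%:P) ^+ m)`_k = c ^+ (m - k) *+ 'C(m, k).
Proof.
have -> : 'X + c%:P = 'X * 1%:P + c%:P by rewrite mulr1.
by rewrite coef_linpow expr1n mul1r.
Qed.


Definition mxp (R : comNzRingType) q (g : nat -> {poly R}) : 'M[R]_q :=
  \matrix_(i, j) (g j)`_i.
Definition Smx (R : comNzRingType) q (c : R) : 'M[R]_q :=
  \matrix_(i, j) (c ^+ (j - i) *+ 'C(j, i)).
Definition Dmx (R : comNzRingType) q : 'M[R]_q := diag_mx (\row_(i < q) (-1) ^+ i).
Definition Jmx (R : comNzRingType) q : 'M[R]_q :=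
  \matrix_(i, j) ((i + j == q.-1)%N)%:R.

Lemma eq_mxp (R : comNzRingType) q (g g' : nat -> {poly R}) :
  (forall j, (j < q)%N -> g j = g' j) -> mxp q g = mxp q g'.
Proof. by move=> h; apply/matrixP => i j; rewrite !mxE h. Qed.

Lemma mxp_mul (R : comNzRingType) q (g1 g2 : nat -> {poly R}) :
  (forall j, (j < q)%N -> (size (g2 j) <= q)%N) ->
  mxp q g1 *m mxp q g2 = mxp q (fun j => \sum_(k < q) (g2 j)`_k *: g1 k).
Proof.
move=> hs; apply/matrixP => i j; rewrite !mxE coef_sum.
by apply: eq_bigr => k _; rewrite !mxE coefZ mulrC.
Qed.

Lemma sum_comp (R : comNzRingType) q (h G : {poly R}) :
  (size h <= q)%N -> \sum_(k < q) h`_k *: G ^+ k = h \Po G.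
Proof.
move=> hs; rewrite comp_polyE.
rewrite (big_ord_widen q (fun k => h`_k *: G ^+ k) hs).
rewrite (bigID (fun k : 'I_q => (k < size h)%N)) /= addrC big1 ?add0r //.
by move=> k; rewrite -leqNgt => hk; rewrite nth_default // scale0r.
Qed.

Lemma size_XaddC_pow (R : comNzRingType) (c : R) j : (size (('X + c%:P) ^+ j) <= j.+1)%N.
Proof.
apply/leq_sizeP => k hk; rewrite coef_XaddC_pow bin_small ?mulr0n //.
Qed.

Lemma Smx_mxp (R : comNzRingType) q (c : R) :
  Smx q c = mxp q (fun j => ('X + c%:P) ^+ j).
Proof. by apply/matrixP => i j; rewrite !mxE coef_XaddC_pow. Qed.

Lemma SmxM (R : comNzRingType) q (c d : R) : Smx q c *m Smx q d = Smx q (c + d).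
Proof.
rewrite !Smx_mxp mxp_mul; last first.
  by move=> j hj; apply: leq_trans (size_XaddC_pow _ _) hj.
apply: eq_mxp => j hj.
rewrite sum_comp; last by apply: leq_trans (size_XaddC_pow _ _) hj.
by rewrite rmorphXn /= comp_polyD comp_polyX comp_polyC polyCD addrA.
Qed.


Lemma Smx0 (R : comNzRingType) q : Smx q (0 : R) = 1%:M.
Proof.
apply/matrixP => i j; rewrite !mxE.
case: (ltngtP i j) => h.
- by rewrite expr0n subn_eq0 leqNgt h /= mul0rn; case: eqP h => // ->; rewrite ltnn.
- by rewrite bin_small // mulr0n; case: eqP h => // ->; rewrite ltnn.
- by rewrite (val_inj h) subnn expr0 binn eqxx.
Qed.

Lemma DmxK (R : comNzRingType) q : Dmx R q *m Dmx R q = 1%:M :> 'M[R]_q.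
Proof.
rewrite /Dmx mulmx_diag; apply/matrixP => i j; rewrite !mxE.
by rewrite -exprD -signr_odd addnn odd_double expr0.
Qed.

Lemma SmxD (R : comNzRingType) q (c : R) :
  Smx q c *m Dmx R q = Dmx R q *m Smx q (- c).
Proof.
rewrite /Dmx mul_diag_mx mul_mx_diag; apply/matrixP => i j; rewrite !mxE.
case: (leqP i j) => h; last by rewrite bin_small // !mulr0n mulr0 mul0r.
rewrite mulrnAr mulrnAl; congr (_ *+ _).
rewrite -[in RHS](mulN1r c) exprMn mulrA -exprD subnKC //.
by rewrite mulrC.
Qed.

Lemma mulmxJ (R : comNzRingType) q (A : 'M[R]_q) i j :
  (A *m Jmx R q) i j = A i (rev_ord j).
Proof.
rewrite !mxE (bigD1 (rev_ord j)) //= big1 ?addr0.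
  rewrite mxE /=.
  have -> : (q - j.+1 + j = q.-1)%N by have := ltn_ord j; lia.
  by rewrite eqxx mulr1.
move=> k hk; rewrite mxE.
case: eqP => [e|]; last by rewrite mulr0.
case/eqP: hk; apply: val_inj => /=.
have := ltn_ord j; move: e; lia.
Qed.


Lemma Jmx_tr (R : comNzRingType) q : (Jmx R q)^T = Jmx R q.
Proof. by apply/matrixP => i j; rewrite !mxE addnC. Qed.

Lemma mulJmx (R : comNzRingType) q (A : 'M[R]_q) i j :
  (Jmx R q *m A) i j = A (rev_ord i) j.
Proof.
rewrite -[Jmx R q *m A]trmxK trmx_mul Jmx_tr mxE mulmxJ mxE //.
Qed.

Lemma JmxK (R : comNzRingType) q : Jmx R q *m Jmx R q = 1%:M.
Proof.
apply/matrixP => i j; rewrite mulmxJ !mxE /=.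
have := ltn_ord i; have := ltn_ord j.
case: (i =P j) => [->|hij] hj hi.
  by have -> : (j + (q - j.+1) == q.-1)%N by apply/eqP; lia.
have -> : (i + (q - j.+1) == q.-1)%N = false.
  by apply/negbTE/eqP => e; apply: hij; apply: val_inj => /=; lia.
by [].
Qed.

Lemma JS_mxp (R : comNzRingType) q (d : R) :
  Jmx R q *m Smx q d =
  mxp q (fun j => 'X^(q.-1 - j) * ('X * d%:P + 1%:P) ^+ j).
Proof.
apply/matrixP => i j; rewrite mulJmx !mxE /= coefXnM coef_linpow expr1n mulr1.
have := ltn_ord i; have := ltn_ord j => hj hi.
case: ltnP => h1.
  by rewrite bin_small ?mulr0n //; lia.
have -> : (j - (q - i.+1) = i - (q.-1 - j))%N by lia.
rewrite -bin_sub; last by lia.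
by have -> : (j - (q - i.+1) = i - (q.-1 - j))%N by lia.
Qed.

Lemma trig_SJS (R : comNzRingType) q (c d : R) : c * d + 1 = 0 ->
  let M := Smx q c *m Jmx R q *m Smx q d in
  (forall i j : 'I_q, (i < j)%N -> M i j = 0) /\
  (forall i : 'I_q, M i i = c ^+ (q.-1 - i) * d ^+ i).
Proof.
move=> hcd M.
have EM : M = mxp q (fun j => ('X + c%:P) ^+ (q.-1 - j) * ('X * d%:P) ^+ j).
  rewrite /M -mulmxA JS_mxp Smx_mxp mxp_mul; last first.
    move=> j hj; apply/leq_sizeP => k hk; rewrite coefXnM coef_linpow.
    case: ltnP => // h; rewrite bin_small ?mulr0n //; lia.
  apply: eq_mxp => j hj; rewrite sum_comp; last first.
    apply/leq_sizeP => k hk; rewrite coefXnM coef_linpow.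
    case: ltnP => // h; rewrite bin_small ?mulr0n //; lia.
  rewrite rmorphM rmorphXn rmorphXn /= comp_polyX comp_polyD comp_polyM.
  rewrite comp_polyX !comp_polyC; congr (_ * _ ^+ _).
  by rewrite mulrDl -addrA -polyCM -polyCD hcd addr0.
split.
  move=> i j hij; rewrite EM mxE exprMn -polyC_exp mulrA coefMC coefMXn hij.
  by rewrite mul0r.
move=> i; rewrite EM mxE exprMn -polyC_exp mulrA coefMC coefMXn ltnn subnn.
rewrite coef_XaddC_pow subn0 bin0 mulr1n //.
Qed.


Lemma XaddC1_coef (R : comNzRingType) m k :
  (('X + 1%:P : {poly R}) ^+ m)`_k = ('C(m, k))%:R.
Proof. by rewrite coef_XaddC_pow expr1n. Qed.

Lemma B0 (R : comNzRingType) p l : p \in [pchar R] ->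
  forall i, (0 < i < p ^ l)%N -> ('C((p ^ l).-1 + i, i))%:R = 0 :> R.
Proof.
move=> hc i /andP[i0 iq].
have pp := pcharf_prime hc.
have F : ('X + 1%:P : {poly R}) ^+ (p ^ l) = 'X ^+ (p ^ l) + 1%:P ^+ (p ^ l).
  apply: exprDn_pchar.
  rewrite (eq_pnat _ (pchar_poly R)) pnatX pnatE //= hc //.
rewrite -XaddC1_coef.
have -> : ((p ^ l).-1 + i = p ^ l + i.-1)%N by lia.
rewrite exprD F expr1n mulrDl coefD coefXnM iq mul1r add0r XaddC1_coef.
by rewrite bin_small // prednK.
Qed.

Lemma KL' (R : comNzRingType) q :
  (forall i, (0 < i < q)%N -> ('C(q.-1 + i, i))%:R = 0 :> R) ->
  forall i j, (i < q)%N -> (j < q)%N ->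
  (-1) ^+ i * ('C(q.-1 - j, i))%:R = ('C(i + j, i))%:R :> R.
Proof.
move=> hB.
elim=> [|i IH] j hi hj; first by rewrite expr0 mul1r !bin0.
have hi' : (i < q)%N by lia.
suff H : forall k, (k < q)%N ->
  (-1) ^+ i.+1 * ('C(q.-1 - (q.-1 - k), i.+1))%:R = ('C(i.+1 + (q.-1 - k), i.+1))%:R :> R.
  have hh : (q.-1 - j < q)%N by lia.
  have ej : (q.-1 - (q.-1 - j) = j)%N by lia.
  by have := H _ hh; rewrite ej.
elim=> [|k IHk] hk.
  rewrite !subn0 subnn bin0n /= mulr0 [(i.+1 + q.-1)%N]addnC.
  by rewrite hB //; lia.
have e1 : (q.-1 - (q.-1 - k.+1) = (q.-1 - (q.-1 - k)).+1)%N by lia.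
have e2 : (i.+1 + (q.-1 - k) = (i.+1 + (q.-1 - k.+1)).+1)%N by lia.
have e3 : (i + (q.-1 - k) = i.+1 + (q.-1 - k.+1))%N by lia.
have IH1 := IHk (ltnW hk).
have IH2 := IH (q.-1 - k)%N hi' ltac:(lia).
rewrite e1 binS natrD mulrDr IH1 e2 binS natrD.
by rewrite exprS mulN1r mulNr IH2 e3 addrK.
Qed.

Lemma KL (R : comNzRingType) p l : p \in [pchar R] ->
  forall i j, (i < p ^ l)%N -> (j < p ^ l)%N ->
  (-1) ^+ i * ('C((p ^ l).-1 - j, i))%:R = ('C(i + j, i))%:R :> R.
Proof. by move=> hc; apply: KL'; apply: B0. Qed.



Lemma vand_sq i j q : (i < q)%N ->
  (\sum_(k < q) 'C(i, k) * 'C(j, k) = 'C(i + j, i))%N.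
Proof.
move=> hi.
rewrite -binomial.Vandermonde [RHS](reindex_inj rev_ord_inj) /=.
rewrite (bigID (fun k : 'I_q => (k < i.+1)%N)) /= [X in (_ + X)%N]big1 ?addn0; last first.
  by move=> k; rewrite -leqNgt => hk; rewrite bin_small.
rewrite -(big_ord_widen q (fun k => 'C(i, k) * 'C(j, k))%N hi).
apply: eq_bigr => k _; have := ltn_ord k => hk.
rewrite subSS bin_sub; last by lia.
by rewrite (_ : i - (i - k) = k)%N //; lia.
Qed.

Lemma pascal_LU (R : comNzRingType) q :
  pascal_mx R q = (Smx q 1)^T *m Smx q (1 : R).
Proof.
apply/matrixP => i j; rewrite !mxE.
rewrite -(vand_sq j (ltn_ord i)) natr_sum.
apply: eq_bigr => k _; rewrite !mxE !expr1n natrM.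
by [].
Qed.

Lemma pascal_sym (R : comNzRingType) q : (pascal_mx R q)^T = pascal_mx R q.
Proof.
apply/matrixP => i j; rewrite !mxE.
have binC a b : 'C(a + b, a) = 'C(a + b, b).
  by rewrite -{3}(addKn a b) bin_sub // leq_addr.
by rewrite binC addnC.
Qed.

Lemma pascal_DUJ (R : comNzRingType) p l (hc : p \in [pchar R]) :
  pascal_mx R (p ^ l) = Dmx R (p ^ l) *m (Smx (p ^ l) 1 *m Jmx R (p ^ l)).
Proof.
apply/matrixP => i j; rewrite /Dmx mul_diag_mx [RHS]mxE mulmxJ !mxE /= expr1n.
rewrite -(KL hc (ltn_ord i) (ltn_ord j)) /=.
by rewrite (_ : p ^ l - j.+1 = (p ^ l).-1 - j)%N //; have := ltn_ord j; lia.
Qed.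

Lemma pascal_cube (R : comNzRingType) p l (hc : p \in [pchar R]) :
  let P := pascal_mx R (p ^ l) in P *m P *m P = 1%:M.
Proof.
move=> P.
have hP := @pascal_DUJ R p l hc.
have hPt : P = Jmx R (p ^ l) *m (Smx (p ^ l) 1)^T *m Dmx R (p ^ l).
  by rewrite /P -pascal_sym hP !trmx_mul tr_diag_mx Jmx_tr.
have hLU := pascal_LU R (p ^ l).
have -> : P *m P *m P = (Dmx R (p ^ l) *m (Smx (p ^ l) 1 *m Jmx R (p ^ l))) *m
   (Jmx R (p ^ l) *m (Smx (p ^ l) 1)^T *m Dmx R (p ^ l)) *m
   (Dmx R (p ^ l) *m (Smx (p ^ l) 1 *m Jmx R (p ^ l))).
  by rewrite -hP -hPt.
rewrite !mulmxA -(mulmxA _ (Jmx R _) (Jmx R _)) JmxK mulmx1.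
rewrite -(mulmxA _ (Dmx R _) (Dmx R _)) DmxK mulmx1.
rewrite -(mulmxA _ (Smx _ 1)^T (Smx _ 1)) -hLU hP.
rewrite !mulmxA -(mulmxA _ (Jmx R _) (Jmx R _)) JmxK mulmx1.
rewrite -(mulmxA (Dmx R _) (Smx _ 1) (Dmx R _)) SmxD mulmxA DmxK mul1mx.
by rewrite SmxM addNr Smx0.
Qed.


Lemma char_poly_conj (R : comNzRingType) n (V A W : 'M[R]_n) :
  V *m W = 1%:M -> char_poly (V *m A *m W) = char_poly A.
Proof.
move=> hVW; rewrite /char_poly /char_poly_mx.
have hm : map_mx (@polyC R) V *m map_mx polyC W = 1%:M by rewrite -map_mxM hVW map_mx1.
have -> : 'X%:M - map_mx polyC (V *m A *m W) =
    map_mx polyC V *m ('X%:M - map_mx polyC A) *m map_mx polyC W.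
  by rewrite mulmxBr mulmxBl !map_mxM mul_mx_scalar -scalemxAl hm scalemx1.
by rewrite !det_mulmx mulrAC -det_mulmx hm det1 mul1r.
Qed.

Lemma prod3 (R : comNzRingType) (w : R) : w ^+ 2 + w + 1 = 0 ->
  forall s m, \prod_(0 <= b < 3 * m) ('X - (w ^+ (s + b))%:P) = ('X ^+ 3 - 1) ^+ m.
Proof.
move=> hw s; elim=> [|m IH]; first by rewrite muln0 big_geq // expr0.
have w3 : w ^+ 3 = 1.
  apply/eqP; rewrite -subr_eq0.
  have -> : w ^+ 3 - 1 = (w - 1) * (w ^+ 2 + w + 1) by ring.
  by rewrite hw mulr0.
rewrite mulnS !addSn addnC big_nat_recr ?leq_addl // big_nat_recr ?leq_addl //.
rewrite big_nat_recr ?leq_addl //= addn0 IH (exprSr ('X ^+ 3 - 1) m).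
rewrite -!mulrA; congr (_ * _).
have key : forall A W : {poly R}, A ^+ 3 = 1 -> W ^+ 2 + W + 1 = 0 ->
    ('X - A) * (('X - A * W) * ('X - A * (W * W))) = 'X ^+ 3 - 1.
  move=> A W hA hW.
  have hW3 : W ^+ 3 = 1.
    apply/eqP; rewrite -subr_eq0.
    have -> : W ^+ 3 - 1 = (W - 1) * (W ^+ 2 + W + 1) by ring.
    by rewrite hW mulr0.
  have -> : ('X - A) * (('X - A * W) * ('X - A * (W * W))) =
     'X ^+ 3 - A * (W ^+ 2 + W + 1) * 'X ^+ 2 + A ^+ 2 * W * (W ^+ 2 + W + 1) * 'X
     - A ^+ 3 * W ^+ 3 by ring.
  by rewrite hW hA hW3 !mulr0 !mul0r subr0 addr0 mulr1.
have e1 : w ^+ (s + (3 * m).+1) = w ^+ (s + 3 * m) * w by rewrite addnS exprS mulrC.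
have e2 : w ^+ (s + (3 * m).+2) = w ^+ (s + 3 * m) * (w * w) by rewrite !addnS !exprS; ring.
rewrite e1 e2 !polyCM; apply: key.
  by rewrite -polyC_exp -exprM mulnC exprM w3 expr1n.
by rewrite -polyC_exp -polyC1 -!polyCD hw.
Qed.

Lemma char_pascal_prod (R : comNzRingType) p l (hc : p \in [pchar R]) (w : R) :
  w ^+ 2 + w + 1 = 0 -> (-1) ^+ (p ^ l).-1 = 1 :> R ->
  char_poly (pascal_mx R (p ^ l)) =
  \prod_(b < p ^ l) ('X - (w ^+ ((p ^ l).-1 + b))%:P).
Proof.
move=> hw hs.
set q := (p ^ l)%N.
have hV : Smx q (- w) *m Smx q w = 1%:M by rewrite SmxM addNr Smx0.
rewrite -(char_poly_conj (pascal_mx R q) hV).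
rewrite (@pascal_DUJ R p l hc) -/q.
rewrite !mulmxA SmxD opprK -(mulmxA _ (Smx q w)) SmxM -!mulmxA mulmxA.
have hcd : (w + 1) * w + 1 = 0 by rewrite mulrDl mul1r -expr2.
have [Mtr Mdg] := trig_SJS q hcd.
rewrite -mulmxA (mulmxA (Smx q (w + 1))).
set M := Smx q (w + 1) *m Jmx R q *m Smx q w in Mtr Mdg *.
rewrite char_poly_trig; last first.
  by apply/is_trig_mxP => i j hij; rewrite /Dmx mul_diag_mx mxE Mtr // mulr0.
have hw1 : w + 1 = - w ^+ 2.
  have -> : w + 1 = (w ^+ 2 + w + 1) - w ^+ 2 by ring.
  by rewrite hw sub0r.
rewrite [LHS](reindex_inj rev_ord_inj); apply: eq_bigr => i _; congr (_ - _%:P).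
rewrite /Dmx mul_diag_mx mxE Mdg !mxE /= hw1.
have hi := ltn_ord i.
have -> : (q.-1 - (q - i.+1) = i)%N by lia.
have -> : (- w ^+ 2) ^+ i = (-1) ^+ i * w ^+ (2 * i).
  by rewrite -[- w ^+ 2]mulN1r exprMn -exprM.
rewrite mulrA mulrA -exprD (_ : q - i.+1 + i = q.-1)%N; last by lia.
rewrite hs mul1r -exprD; congr (_ ^+ _); lia.
Qed.


Lemma expo_helper k : `|((k%:Z * 3) %/ 3)%Z|%N = k.
Proof. by rewrite mulzK. Qed.

Lemma prod_final (R : comNzRingType) (w : R) : w ^+ 2 + w + 1 = 0 ->
  forall q, (0 < q)%N ->
  \prod_(b < q) ('X - (w ^+ (q.-1 + b))%:P) =
  ('X ^+ 2 + 'X + 1) ^+ expo_quad q * ('X - 1) ^+ expo_lin q.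
Proof.
move=> hw q q0.
have w3 : w ^+ 3 = 1.
  apply/eqP; rewrite -subr_eq0.
  have -> : w ^+ 3 - 1 = (w - 1) * (w ^+ 2 + w + 1) by ring.
  by rewrite hw mulr0.
have wm m c : w ^+ (3 * m + c) = w ^+ c by rewrite exprD exprM w3 expr1n mul1r.
have X3 : ('X ^+ 3 - 1 : {poly R}) = ('X ^+ 2 + 'X + 1) * ('X - 1) by ring.
rewrite -(big_mkord xpredT (fun b => 'X - (w ^+ (q.-1 + b))%:P)).
have hq := divn_eq q 3; have hr := ltn_mod q 3.
move: hq hr; set k := (q %/ 3)%N; set r := (q %% 3)%N => hq hr.
rewrite /expo_quad /expo_lin /epsilon3 -/r.
rewrite hq (big_cat_nat _ (n := 3 * k)) //=; last by lia.
rewrite prod3 // X3 exprMn.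
case: r hq hr => [|[|[|r']]] hq hr //.
- rewrite big_geq; last by lia.
  rewrite mulr1.
  rewrite (_ : (if 0%N == 2%N then -1 else 0%:Z) = 0) //.
  have -> : ((k * 3 + 0)%N%:Z - 0 = k%:Z * 3)%R by lia.
  by rewrite !expo_helper.
- rewrite (_ : (k * 3 + 1 = (3 * k).+1)%N); last by lia.
  rewrite big_nat1 (_ : ((3 * k).+1.-1 + 3 * k = 3 * (2 * k) + 0)%N); last by lia.
  rewrite wm expr0.
  rewrite (_ : (if 1%N == 2%N then -1 else 1%:Z) = 1) //.
  have -> : ((3 * k).+1%:Z - 1 = k%:Z * 3)%R by lia.
  have -> : ((3 * k).+1%:Z + 2 * 1 = (k + 1)%N%:Z * 3)%R by lia.
  rewrite !expo_helper exprD expr1 !mulrA; congr (_ * _).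
- rewrite (_ : (k * 3 + 2 = (3 * k).+2)%N); last by lia.
  rewrite big_nat_recr // big_nat1.
  rewrite (_ : ((3 * k).+2.-1 + 3 * k = 3 * (2 * k) + 1)%N); last by lia.
  rewrite (_ : ((3 * k).+2.-1 + (3 * k).+1 = 3 * (2 * k) + 2)%N); last by lia.
  rewrite !wm expr1.
  rewrite (_ : (if 2%N == 2%N then -1 else 2%:Z) = -1) //.
  have -> : ((3 * k).+2%:Z - (-1) = (k + 1)%N%:Z * 3)%R by lia.
  have -> : ((3 * k).+2%:Z + 2 * (-1) = k%:Z * 3)%R by lia.
  rewrite !expo_helper exprD expr1.
  rewrite /=.
  have -> : ('X - w%:P) * ('X - (w ^+ 2)%:P) = 'X ^+ 2 + 'X + 1 :> {poly R}.
    have -> : ('X - w%:P) * ('X - (w ^+ 2)%:P) =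
       'X ^+ 2 - (w ^+ 2 + w)%:P * 'X + (w ^+ 3)%:P :> {poly R}.
      by rewrite polyCD !polyC_exp; ring.
    have -> : w ^+ 2 + w = - 1 by rewrite -(subr0 (w ^+ 2 + w)) -hw; ring.
    by rewrite w3 polyCN mulN1r opprK.
  by rewrite -!mulrA; congr (_ * _); rewrite mulrC.
Qed.


Unset Implicit Arguments.

Theorem proposition1p2 (p l : nat) (hp : prime p) (hl : (0 < l)%N) :
  let q := (p ^ l)%N in
  let P := pascal_mx 'F_p q in
  [/\ P \in unitmx, P ^+ 3 = 1%:M, P ^+ 1 != 1%:M, P ^+ 2 != 1%:M &
      char_poly P = ('X ^+ 2 + 'X + 1) ^+ expo_quad q * ('X - 1) ^+ expo_lin q].
Proof.
move=> q P.
have hc : p \in [pchar 'F_p] := pchar_Fp hp.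
have h3 : P *m P *m P = 1%:M := @pascal_cube _ p l hc.
have p2 : (1 < p)%N := prime_gt1 hp.
have q2 : (1 < q)%N.
  by apply: (leq_trans p2); rewrite /q -{1}(expn1 p) leq_exp2l.
have P3 : P ^+ 3 = 1%:M by rewrite !exprS expr0 mulr1 -!mulmxE mulmxA h3.
have P1 : P ^+ 1 != 1%:M.
  rewrite expr1; apply/eqP => /matrixP /(_ (Ordinal (ltnW q2)) (Ordinal q2)).
  by rewrite !mxE /= bin0 => /eqP; rewrite oner_eq0.
split => //.
- by case: (mulmx1_unit (A := P) (B := P *m P)); rewrite ?mulmxA.
- apply/eqP => h2; move/eqP: P1; apply.
  by rewrite -P3 (exprS P 2) h2 mulr1.
have [K [f _]] := countable_algebraic_closure 'F_p.
apply: (@map_poly_inj _ _ f).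
rewrite map_char_poly.
have -> : map_mx f P = pascal_mx K q.
  by apply/matrixP => i j; rewrite !mxE rmorph_nat.
rewrite rmorphM !rmorphXn /= !rmorphD rmorphXn rmorphN /= map_polyX rmorph1.
have hcK : p \in [pchar K] := rmorph_pchar f hc.
have [w hw] : exists w : K, w ^+ 2 + w + 1 = 0.
  have : size ('X ^+ 2 + 'X + 1 : {poly K}) != 1%N.
    rewrite -addrA size_polyDl ?size_polyXn //.
    by rewrite (leq_ltn_trans (size_polyD _ _)) // size_polyX size_poly1.
  case/closed_rootP => x; rewrite rootE !hornerE => /eqP hx.
  by exists x.
have hs : (-1) ^+ q.-1 = 1 :> K.
  case: (even_prime hp) => [p2e|podd].
    have h2 : (2%:R : K) = 0 by rewrite -{1}p2e; apply: pcharf0 hcK.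
    have -> : (-1 : K) = 1.
      by apply/eqP; rewrite eq_sym -addr_eq0 -mulr2n h2.
    by rewrite expr1n.
  rewrite -signr_odd.
  have : odd q by rewrite /q oddX podd orbT.
  by case: (q) q2 => // n _ /= /negbTE ->.
by rewrite (@char_pascal_prod K p l hcK w hw hs) prod_final // ltnW.
Qed.
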